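(* Let $\alpha\in(0,1)$ and let $G=(V,E)$ be a finite connected graph satisfying CD$_\alpha(F;0)$ for a CD-function $F$ with relaxation function $\varphi$. Suppose $u:[0,\infty)\times V\to(0,\infty)$ solves the heat equation on $G$. Then $$-\frac{\Delta(u^\alpha)}{\alpha u^\alpha}=\mathcal L_\alpha(\log u)\le\varphi(t)\quad\text{on }(0,\infty)\times V,$$ and consequently $$\partial_t(\log u)\ge\Psi_\Upsilon(\log u)-\tfrac1\alpha\Psi_{\Upsilon_\alpha}(\log u)-\varphi(t)\quad\text{on }(0,\infty)\times V.$$
   Context: Graphs are undirected, edge weights $w_{xy}=w_{yx}>0$, $\mu:V\to(0,\infty)$, $\Delta u(x)=\frac1{\mu(x)}\sum_{y\sim x}w_{xy}(u(y)-u(x))$, $L=-\Delta$, $\Psi_H(v)(x)=\frac1{\mu(x)}\sum_{y\sim x}w_{xy}H(v(y)-v(x))$, $\Upsilon(z)=e^z-1-z$, $\Upsilon_\alpha(z)=\Upsilon(\alpha z)$. $\mathcal L_\alpha(v)(x)=-\frac1\alpha\Psi_{\Upsilon'}(\alpha v)(x)$; $\mathcal C_\alpha(v)(x)=\frac1{\mu(x)}\sum_{y\sim x}w_{xy}e^{\alpha(v(y)-v(x))}(\Psi_{\Upsilon'}(v)(y)-\Psi_{\Upsilon'}(v)(x))$. A CD-function is a continuous $F:[0,\infty)\to[0,\infty)$ with $F(0)=0$, $F(x)/x$ strictly increasing on $(0,\infty)$, $\int_1^\infty dr/F(r)<\infty$; its relaxation function is the unique positive solution of $\dot\varphi+F(\varphi)=0$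 on $(0,\infty)$ with $\varphi(0+)=\infty$. $G$ satisfies CD$_\alpha(F;0)$ if for every $x\in V$ and $v:V\to\mathbb R$ with $\mathcal L_\alpha(v)(x)>0$ and $\mathcal L_\alpha(v)(x)\ge\mathcal L_\alpha(v)(y)$ for all $y\sim x$, $\mathcal C_\alpha(v)(x)\ge F(Lv(x))$. A solution of the heat equation is $u$, $C^1$ in $t$, with $\partial_tu=\Delta u$ on $[0,\infty)\times V$. *)

(* Defs.v *)
From Stdlib Require Import Reals Lra List.
Open Scope R_scope.

(* Weights are a function w : V -> V -> R with
   w x y = w y x >= 0; x ~ y  iff  w x y > 0 (so w x y = 0 off edges),
   and no loops (w x x = 0).  mu : V -> (0,oo). *)

Definition finite_enum {V : Type} (vs : list V) : Prop :=
  NoDup vs /\ forall x : V, In x vs.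

Definition adj {V : Type} (w : V -> V -> R) (x y : V) : Prop := 0 < w x y.

Definition weighted_graph {V : Type} (vs : list V) (w : V -> V -> R)
  (mu : V -> R) : Prop :=
  finite_enum vs /\
  (forall x y, w x y = w y x) /\
  (forall x y, 0 <= w x y) /\
  (forall x, w x x = 0) /\
  (forall x, 0 < mu x).

Inductive reachable {V : Type} (w : V -> V -> R) : V -> V -> Prop :=
| reach_refl : forall x, reachable w x x
| reach_step : forall x y z, adj w x y -> reachable w y z -> reachable w x z.

Definition connected {V : Type} (w : V -> V -> R) : Prop :=
  forall x y : V, reachable w x y.

Definition vsum {V : Type} (vs : list V) (f : V -> R) : R :=
  fold_right (fun y acc => f y + acc) 0 vs.

(* Sum over neighbours y ~ x of w_xy * g y: non-neighbours have w_xy = 0. *)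
Definition Laplacian {V : Type} (vs : list V) (w : V -> V -> R) (mu : V -> R)
  (u : V -> R) (x : V) : R :=
  / mu x * vsum vs (fun y => w x y * (u y - u x)).

Definition Lop {V : Type} (vs : list V) (w : V -> V -> R) (mu : V -> R)
  (u : V -> R) (x : V) : R := - Laplacian vs w mu u x.

Definition Psi {V : Type} (vs : list V) (w : V -> V -> R) (mu : V -> R)
  (H : R -> R) (v : V -> R) (x : V) : R :=
  / mu x * vsum vs (fun y => w x y * H (v y - v x)).

Definition Upsilon (z : R) : R := exp z - 1 - z.
Definition Upsilon' (z : R) : R := exp z - 1.
Definition Upsilon_a (a z : R) : R := Upsilon (a * z).

Definition Lalpha {V : Type} (vs : list V) (w : V -> V -> R) (mu : V -> R)
  (a : R) (v : V -> R) (x : V) : R :=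
  - (/ a) * Psi vs w mu Upsilon' (fun y => a * v y) x.

Definition Calpha {V : Type} (vs : list V) (w : V -> V -> R) (mu : V -> R)
  (a : R) (v : V -> R) (x : V) : R :=
  / mu x * vsum vs (fun y => w x y * exp (a * (v y - v x)) *
     (Psi vs w mu Upsilon' v y - Psi vs w mu Upsilon' v x)).

Definition CD_function (F : R -> R) : Prop :=
  (forall x, 0 <= x -> limit1_in F (fun y => 0 <= y) (F x) x) /\
  (forall x, 0 <= x -> 0 <= F x) /\
  F 0 = 0 /\
  (forall x y, 0 < x -> x < y -> F x / x < F y / y) /\
  (* int_1^oo dr / F(r) < oo  (integrand is positive) *)
  (exists M : R, forall b : R, 1 <= b ->
     forall pr : Riemann_integrable (fun r => / F r) 1 b, RiemannInt pr <= M).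

Definition relaxation_function (F phi : R -> R) : Prop :=
  (forall t, 0 < t -> 0 < phi t) /\
  (forall t, 0 < t -> derivable_pt_lim phi t (- F (phi t))) /\
  (forall M : R, exists delta : R, 0 < delta /\
     forall t, 0 < t < delta -> M < phi t).

Definition CD_alpha {V : Type} (vs : list V) (w : V -> V -> R) (mu : V -> R)
  (a : R) (F : R -> R) : Prop :=
  forall (x : V) (v : V -> R),
    0 < Lalpha vs w mu a v x ->
    (forall y, adj w x y -> Lalpha vs w mu a v y <= Lalpha vs w mu a v x) ->
    F (Lop vs w mu v x) <= Calpha vs w mu a v x.

(* ---------- Heat equation ----------
   u : [0,oo) x V -> R, C^1 in t, d/dt u = Delta u on [0,oo) x V.
   At t = 0 the derivative is one-sided (from the right). Since the
   derivative equals Delta u(t), which is continuous in t wherever u is,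
   C^1 is automatic from these conditions. *)
Definition heat_solution {V : Type} (vs : list V) (w : V -> V -> R)
  (mu : V -> R) (u : R -> V -> R) : Prop :=
  (forall x t, 0 < t ->
     derivable_pt_lim (fun s => u s x) t (Laplacian vs w mu (u t) x)) /\
  (forall x (eps : R), 0 < eps -> exists delta : R, 0 < delta /\
     forall h, 0 < h < delta ->
       Rabs ((u h x - u 0 x) / h - Laplacian vs w mu (u 0) x) < eps).

(* Main.v *)
Require Import Defs.
From Stdlib Require Import Reals Lra List Classical FunctionalExtensionality.
Open Scope R_scope.


Lemma vsum_ext {V} (l : list V) f g : (forall y, f y = g y) -> vsum l f = vsum l g.
Proof. intros H; induction l; simpl; [reflexivity| rewrite H, IHl; auto]. Qed.
Lemma vsum_scal {V} (l : list V) (c:R) f : vsum l (fun y => c * f y) = c * vsum l f.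
Proof. induction l; simpl; [ring| rewrite IHl; ring]. Qed.
Lemma vsum_plus {V} (l : list V) f g : vsum l (fun y => f y + g y) = vsum l f + vsum l g.
Proof. induction l; simpl; [ring| rewrite IHl; ring]. Qed.
Lemma vsum_le {V} (l : list V) f g : (forall y, f y <= g y) -> vsum l f <= vsum l g.
Proof. intros H; induction l; simpl; [lra| specialize (H a); lra]. Qed.
Lemma vsum_nonneg {V} (l : list V) f : (forall y, 0 <= f y) -> 0 <= vsum l f.
Proof. intros H; induction l; simpl; [lra| specialize (H a); lra]. Qed.
Lemma vsum_ge_term {V} (l : list V) f y0 : (forall y, 0 <= f y) -> In y0 l -> f y0 <= vsum l f.
Proof. intros H Hin; induction l; simpl in *; [tauto|].
  destruct Hin as [<-|Hin]. - pose proof (vsum_nonneg l f H); lra.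
  - specialize (IHl Hin); specialize (H a); lra. Qed.
Lemma vsum_neg_ex {V} (l : list V) g : vsum l g < 0 -> exists y, g y < 0.
Proof. induction l; simpl; intros H; [lra|].
  destruct (Rlt_dec (g a) 0) as [h|h]; [eauto|]. apply IHl; lra. Qed.

Lemma dlim_ext f g t l : (forall s, f s = g s) -> derivable_pt_lim f t l -> derivable_pt_lim g t l.
Proof. intros H; replace g with f; auto. apply functional_extensionality; auto. Qed.

Lemma vsum_deriv {V} (l : list V) (f : R -> V -> R) f' t :
  (forall y, derivable_pt_lim (fun s => f s y) t (f' y)) ->
  derivable_pt_lim (fun s => vsum l (f s)) t (vsum l f').
Proof. intros H; induction l; simpl.
  - apply derivable_pt_lim_const.
  - apply (derivable_pt_lim_plus (fun s => f s a) (fun s => vsum l (f s))); auto. Qed.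

Lemma dlim_cont f t l : derivable_pt_lim f t l -> forall eps, 0 < eps ->
  exists d, 0 < d /\ forall y, Rabs (y - t) < d -> Rabs (f y - f t) < eps.
Proof. intros H eps He.
  assert (C : continuity_pt f t) by (apply derivable_continuous_pt; exists l; exact H).
  destruct (C eps He) as [d [Hd Hd2]]. exists d; split; auto. intros y Hy.
  destruct (Req_dec y t) as [->|Hne]. { rewrite Rminus_eq_0, Rabs_R0; lra. }
  apply (Hd2 y). split; [split; [exact I| auto]| exact Hy]. Qed.

Lemma dlim_left_max h T l eta : derivable_pt_lim h T l -> 0 < eta ->
  (forall t, T - eta < t < T -> h t <= h T) -> 0 <= l.
Proof. intros H He Hle. destruct (Rle_dec 0 l) as [|Hl]; auto. exfalso.
  destruct (H (- l / 2)) as [d Hd]; [lra|].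
  pose (hh := - Rmin (pos d) eta / 2).
  assert (Hm1 : 0 < Rmin d eta) by (apply Rmin_pos; [apply cond_pos|lra]).
  assert (Hm2 : Rmin d eta <= d) by apply Rmin_l.
  assert (Hm3 : Rmin d eta <= eta) by apply Rmin_r.
  assert (hh <> 0) by (unfold hh; lra).
  assert (Rabs hh < d) by (unfold hh; rewrite Rabs_left; lra).
  specialize (Hd hh H0 H1).
  specialize (Hle (T + hh) ltac:(unfold hh; lra)).
  assert (0 <= (h (T + hh) - h T) / hh).
  { unfold Rdiv. replace ((h (T + hh) - h T) * / hh) with ((h T - h (T + hh)) * / (- hh)) by (field; auto).
    apply Rmult_le_pos; [lra| left; apply Rinv_0_lt_compat; unfold hh; lra]. }
  apply Rabs_def2 in Hd. lra. Qed.

Lemma uniform_eps {V} (l : list V) (P : V -> R -> Prop) :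
  (forall x, exists e, 0 < e /\ forall h, Rabs h < e -> P x h) ->
  exists e, 0 < e /\ forall x, In x l -> forall h, Rabs h < e -> P x h.
Proof. intros H; induction l.
  - exists 1; split; [lra| intros x []].
  - destruct IHl as [e1 [He1 H1]]. destruct (H a) as [e2 [He2 H2]].
    exists (Rmin e1 e2); split; [apply Rmin_pos; auto|].
    intros x [<-|Hin] h Hh.
    + apply H2. pose proof (Rmin_r e1 e2); lra.
    + apply H1; auto. pose proof (Rmin_l e1 e2); lra. Qed.
Lemma exp_minus' x y : exp (x - y) = exp x / exp y.
Proof. unfold Rminus, Rdiv. rewrite exp_plus, exp_Ropp. reflexivity. Qed.

Lemma dlog {V} (vs : list V) w mu (u : R -> V -> R) t y :
  (forall x, 0 < mu x) -> (forall x, 0 < u t x) ->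
  derivable_pt_lim (fun s => u s y) t (Laplacian vs w mu (u t) y) ->
  derivable_pt_lim (fun s => ln (u s y)) t (Psi vs w mu Upsilon' (fun z => ln (u t z)) y).
Proof. intros Hmu Hu Hd.
  pose proof (derivable_pt_lim_comp (fun s => u s y) ln t _ _ Hd (derivable_pt_lim_ln _ (Hu y))) as H.
  unfold comp in H.
  replace (Psi vs w mu Upsilon' (fun z => ln (u t z)) y) with (/ u t y * Laplacian vs w mu (u t) y); [exact H|].
  unfold Psi, Laplacian, Upsilon'.
  rewrite (vsum_ext vs (fun y0 => w y y0 * (exp (ln (u t y0) - ln (u t y)) - 1)) (fun y0 => / u t y * (w y y0 * (u t y0 - u t y)))).
  2:{ intros z. rewrite exp_minus', !exp_ln by auto.
      field. specialize (Hu y); lra. }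
  rewrite vsum_scal. ring. Qed.

Lemma dW {V} (vs : list V) w mu a (u : R -> V -> R) t x :
  0 < a -> (forall x, 0 < mu x) -> (forall x, 0 < u t x) ->
  (forall y, derivable_pt_lim (fun s => u s y) t (Laplacian vs w mu (u t) y)) ->
  derivable_pt_lim (fun s => Lalpha vs w mu a (fun y => ln (u s y)) x) t
    (- Calpha vs w mu a (fun y => ln (u t y)) x).
Proof. intros Ha Hmu Hu Hd.
  set (P := Psi vs w mu Upsilon' (fun z => ln (u t z))).
  assert (HP : forall y, derivable_pt_lim (fun s => ln (u s y)) t (P y))
    by (intros; apply dlog; auto).
  assert (Hy : forall y, derivable_pt_lim
     (fun s => w x y * Upsilon' (a * ln (u s y) - a * ln (u s x))) t
     (w x y * (exp (a * ln (u t y) - a * ln (u t x)) * (a * P y - a * P x)))).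
  { intros y. apply (derivable_pt_lim_scal (fun s => Upsilon' (a * ln (u s y) - a * ln (u s x)))).
    unfold Upsilon'.
    apply (dlim_ext (fun s => exp (a * ln (u s y) - a * ln (u s x)) - 1)); [reflexivity|].
    replace (exp (a * ln (u t y) - a * ln (u t x)) * (a * P y - a * P x)) with
       (exp (a * ln (u t y) - a * ln (u t x)) * (a * P y - a * P x) - 0) by ring.
    apply (derivable_pt_lim_minus (fun s => exp (a * ln (u s y) - a * ln (u s x))) (fun _ => 1)).
    2: apply derivable_pt_lim_const.

    apply (derivable_pt_lim_comp (fun s => a * ln (u s y) - a * ln (u s x)) exp).
    2: apply derivable_pt_lim_exp.
    apply (derivable_pt_lim_minus (fun s => a * ln (u s y)) (fun s => a * ln (u s x)));
    apply (derivable_pt_lim_scal (fun s => ln (u s _))); auto. }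
  pose proof (vsum_deriv vs _ _ t Hy) as HS.
  unfold Lalpha, Psi.
  apply (dlim_ext (fun s => - / a * (/ mu x * vsum vs (fun y => w x y * Upsilon' (a * ln (u s y) - a * ln (u s x)))))); [reflexivity|].
  replace (- Calpha vs w mu a (fun y : V => ln (u t y)) x) with
    (- / a * (/ mu x * vsum vs (fun y => w x y * (exp (a * ln (u t y) - a * ln (u t x)) * (a * P y - a * P x))))).
  - apply (derivable_pt_lim_scal (fun s => / mu x * _)).
    apply (derivable_pt_lim_scal (fun s => vsum vs _)). exact HS.
  - unfold Calpha. fold P.
    rewrite (vsum_ext vs _ (fun y => a * (w x y * exp (a * (ln (u t y) - ln (u t x))) * (P y - P x)))).
    + rewrite vsum_scal. field. split; [apply Rgt_not_eq, Hmu| lra].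
    + intros y. replace (a * (ln (u t y) - ln (u t x))) with (a * ln (u t y) - a * ln (u t x)) by ring. ring.
Qed.

Lemma part1 {V} (vs : list V) w mu a (f : V -> R) x :
  0 < a -> 0 < mu x -> (forall y, 0 < f y) ->
  - Laplacian vs w mu (fun y => Rpower (f y) a) x / (a * Rpower (f x) a)
   = Lalpha vs w mu a (fun y => ln (f y)) x.
Proof. intros Ha Hm Hf. unfold Laplacian, Lalpha, Psi, Upsilon', Rpower.
  rewrite (vsum_ext vs (fun y => w x y * (exp (a * ln (f y) - a * ln (f x)) - 1))
     (fun y => / exp (a * ln (f x)) * (w x y * (exp (a * ln (f y)) - exp (a * ln (f x)))))).
  - rewrite vsum_scal. pose proof (exp_pos (a * ln (f x))). field. lra.
  - intros y. rewrite exp_minus'. pose proof (exp_pos (a * ln (f x))). field. lra.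
Qed.

Lemma part3 {V} (vs : list V) w mu a (v : V -> R) x :
  0 < a -> 0 < mu x ->
  Psi vs w mu Upsilon v x - / a * Psi vs w mu (Upsilon_a a) v x
  = Psi vs w mu Upsilon' v x + Lalpha vs w mu a v x.
Proof. intros Ha Hm. unfold Lalpha, Psi, Upsilon, Upsilon_a, Upsilon.
  rewrite (vsum_ext vs (fun y => w x y * (exp (v y - v x) - 1 - (v y - v x)))
    (fun y => w x y * Upsilon' (v y - v x) + (-1) * (w x y * (v y - v x)))).
  2:{ intros; unfold Upsilon'; ring. }
  rewrite (vsum_ext vs (fun y => w x y * (exp (a * (v y - v x)) - 1 - a * (v y - v x)))
    (fun y => w x y * Upsilon' (a * v y - a * v x) + (- a) * (w x y * (v y - v x)))).
  2:{ intros; unfold Upsilon'. replace (a * (v y - v x)) with (a * v y - a * v x) by ring. ring. }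
  rewrite !vsum_plus, !vsum_scal. field. split; lra.
Qed.

Lemma Lalpha_lt_Lop {V} (vs : list V) w mu a (v : V -> R) y :
  0 < a -> 0 < mu y -> (forall z, 0 <= w y z) -> (forall z, In z vs) ->
  0 < Lalpha vs w mu a v y -> Lalpha vs w mu a v y < Lop vs w mu v y.
Proof. intros Ha Hm Hw Hin Hpos.
  assert (Hdiff : Lop vs w mu v y - Lalpha vs w mu a v y =
     / mu y * vsum vs (fun z => w y z * ((exp (a * v z - a * v y) - 1) / a - (v z - v y)))).
  { unfold Lop, Lalpha, Laplacian, Psi, Upsilon'.
    rewrite (vsum_ext vs (fun z => w y z * ((exp (a * v z - a * v y) - 1) / a - (v z - v y)))
      (fun z => / a * (w y z * (exp (a * v z - a * v y) - 1)) + (-1) * (w y z * (v z - v y)))).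
    2:{ intros; field; lra. }
    rewrite vsum_plus, !vsum_scal. field. split; lra. }
  assert (Hneg : vsum vs (fun z => w y z * (exp (a * v z - a * v y) - 1)) < 0).
  { unfold Lalpha, Psi, Upsilon' in Hpos.
    destruct (Rlt_dec (vsum vs (fun z => w y z * (exp (a * v z - a * v y) - 1))) 0); auto.
    exfalso. assert (0 <= / a * (/ mu y * vsum vs (fun z => w y z * (exp (a * v z - a * v y) - 1)))).
    { apply Rmult_le_pos; [left; apply Rinv_0_lt_compat; lra|].
      apply Rmult_le_pos; [left; apply Rinv_0_lt_compat; lra| lra]. }
    lra. }
  destruct (vsum_neg_ex vs _ Hneg) as [z Hz].
  assert (Hterm : forall z, 0 <= w y z * ((exp (a * v z - a * v y) - 1) / a - (v z - v y))).
  { intros z'. apply Rmult_le_pos; auto.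
    pose proof (exp_ineq1_le (a * v z' - a * v y)).
    replace ((exp (a * v z' - a * v y) - 1) / a - (v z' - v y)) with
      ((exp (a * v z' - a * v y) - 1 - (a * v z' - a * v y)) / a) by (field; lra).
    apply Rmult_le_pos; [lra| left; apply Rinv_0_lt_compat; lra]. }
  assert (Hz2 : 0 < w y z * ((exp (a * v z - a * v y) - 1) / a - (v z - v y))).
  { set (E := a * v z - a * v y) in *.
    pose proof (Hw z).
    assert (Hwp : 0 < w y z).
    { destruct (Req_dec (w y z) 0) as [h|h]; [rewrite h in Hz; lra| lra]. }
    assert (HE1 : exp E - 1 < 0).
    { destruct (Rlt_dec (exp E - 1) 0); auto. exfalso.
      assert (0 <= w y z * (exp E - 1)) by (apply Rmult_le_pos; lra). lra. }
    assert (HE : E <> 0) by (intro h; rewrite h, exp_0 in HE1; lra).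
    pose proof (exp_ineq1 E HE).
    replace ((exp E - 1) / a - (v z - v y)) with ((exp E - 1 - E) / a) by (unfold E; field; lra).
    apply Rmult_lt_0_compat; auto.
    apply Rmult_lt_0_compat; [lra| apply Rinv_0_lt_compat; lra]. }
  pose proof (vsum_ge_term vs _ z Hterm (Hin z)).
  assert (0 < / mu y * vsum vs (fun z => w y z * ((exp (a * v z - a * v y) - 1) / a - (v z - v y)))).
  { apply Rmult_lt_0_compat; [apply Rinv_0_lt_compat; lra| lra]. }
  lra.
Qed.

Lemma maxprinc {V} (vs : list V) (W C : R -> V -> R) (phi F : R -> R) :
  (forall x, In x vs) ->
  (forall s y, 0 < s -> derivable_pt_lim (fun r => W r y) s (- C s y)) ->
  (forall s, 0 < s -> derivable_pt_lim phi s (- F (phi s))) ->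
  (forall s, 0 < s -> 0 < phi s) ->
  (exists K, forall s y, 0 < s -> W s y <= K) ->
  (forall M, exists delta, 0 < delta /\ forall s, 0 < s < delta -> M < phi s) ->
  (forall s y, 0 < s -> 0 < W s y -> (forall z, W s z <= W s y) -> F (W s y) < C s y) ->
  forall t x, 0 < t -> W t x <= phi t.
Proof.
  intros Hin HdW Hdphi Hphipos [K HK] Hrel HCD t x Ht.
  destruct (Rle_dec (W t x) (phi t)) as [|Hgt]; auto. exfalso. apply Rnot_le_lt in Hgt.
  destruct (Hrel K) as [dl [Hdl Hdl2]].
  assert (Hg : forall s y, 0 < s -> derivable_pt_lim (fun r => phi r - W r y) s (- F (phi s) - - C s y)).
  { intros s y Hs. apply (derivable_pt_lim_minus phi (fun r => W r y)); auto. }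
  set (A := fun s => dl / 2 <= s /\ forall r y, 0 < r < s -> W r y < phi r).
  assert (HAb : forall s, A s -> s <= t).
  { intros s [_ Hs]. destruct (Rle_dec s t) as [|h]; auto. exfalso. apply Rnot_le_lt in h.
    specialize (Hs t x ltac:(lra)). lra. }
  assert (HA0 : A (dl / 2)).
  { split; [lra|]. intros r y Hr. specialize (HK r y ltac:(lra)). specialize (Hdl2 r ltac:(lra)). lra. }
  destruct (completeness A) as [T [HTub HTlub]].
  { exists t. intros s Hs. apply HAb; auto. }
  { exists (dl / 2); auto. }
  assert (HT1 : dl / 2 <= T) by (apply HTub; auto).
  assert (HT2 : forall r y, 0 < r < T -> W r y < phi r).
  { intros r y Hr. destruct (classic (exists s, A s /\ r < s)) as [[s [[_ Hs] Hrs]]|Hno].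
    - apply Hs; lra.
    - exfalso. assert (T <= r); [|lra]. apply HTlub. intros s Hs.
      destruct (Rle_dec s r) as [|h]; auto. exfalso. apply Rnot_le_lt in h. apply Hno. exists s; split; auto; lra. }
  assert (HTpos : 0 < T) by lra.
  assert (HT3 : forall y, W T y <= phi T).
  { intros y. destruct (Rle_dec (W T y) (phi T)) as [|h]; auto. exfalso. apply Rnot_le_lt in h.
    destruct (dlim_cont _ _ _ (Hg T y HTpos) (W T y - phi T) ltac:(lra)) as [d [Hd Hd2]].
    set (r := T - Rmin d T / 2).
    assert (0 < Rmin d T) by (apply Rmin_pos; lra).
    pose proof (Rmin_l d T). pose proof (Rmin_r d T).
    specialize (Hd2 r ltac:(unfold r; rewrite Rabs_left; lra)).
    specialize (HT2 r y ltac:(unfold r; lra)).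
    apply Rabs_def2 in Hd2. lra. }
  destruct (classic (exists y, phi T <= W T y)) as [[y Hy]|Hno].
  - assert (Heq : W T y = phi T) by (specialize (HT3 y); lra).
    assert (Hl : 0 <= - C T y - - F (phi T)).
    { apply (dlim_left_max (fun r => W r y - phi r) T _ T
        (derivable_pt_lim_minus (fun r => W r y) phi T _ _ (HdW T y HTpos) (Hdphi T HTpos)) HTpos).
      intros r Hr. cbv beta. specialize (HT2 r y ltac:(lra)). lra. }
    assert (HC : F (W T y) < C T y).
    { apply HCD; auto. rewrite Heq; auto. intros z. rewrite Heq; auto. }
    rewrite Heq in HC. lra.
  - assert (Hstrict : forall y, W T y < phi T).
    { intros y. destruct (Rlt_dec (W T y) (phi T)) as [|h]; auto. exfalso. apply Rnot_lt_le in h. apply Hno. exists y; lra. }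
    destruct (uniform_eps vs (fun y h => W (T + h) y < phi (T + h))) as [e [He He2]].
    { intros y. destruct (dlim_cont _ _ _ (Hg T y HTpos) (phi T - W T y) ltac:(specialize (Hstrict y); lra)) as [d [Hd Hd2]].
      exists d; split; auto. intros h Hh. specialize (Hd2 (T + h) ltac:(replace (T + h - T) with h by ring; auto)).
      apply Rabs_def2 in Hd2. lra. }
    assert (HAe : A (T + e / 2)).
    { split; [lra|]. intros r y Hr.
      destruct (Rlt_dec r T) as [h|h]. { apply HT2; lra. } apply Rnot_lt_le in h.
      replace r with (T + (r - T)) by ring. apply He2; auto.
      rewrite Rabs_right; lra. }
    specialize (HTub _ HAe). lra.
Qed.

Theorem theorem4p2 (V : Type) (vs : list V) (w : V -> V -> R) (mu : V -> R)
  (a : R) (F phi : R -> R) (u : R -> V -> R) :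
  0 < a < 1 ->
  weighted_graph vs w mu ->
  connected w ->
  CD_function F ->
  relaxation_function F phi ->
  CD_alpha vs w mu a F ->
  (forall t x, 0 <= t -> 0 < u t x) ->
  heat_solution vs w mu u ->
  forall t x, 0 < t ->
    - Laplacian vs w mu (fun y => Rpower (u t y) a) x / (a * Rpower (u t x) a)
      = Lalpha vs w mu a (fun y => ln (u t y)) x /\
    Lalpha vs w mu a (fun y => ln (u t y)) x <= phi t /\
    exists d : R,
      derivable_pt_lim (fun s => ln (u s x)) t d /\
      Psi vs w mu Upsilon (fun y => ln (u t y)) x
        - / a * Psi vs w mu (Upsilon_a a) (fun y => ln (u t y)) x - phi t <= d.
Proof.
  intros Ha WG Hconn HF Hphi HCD Hpos Hheat t x Ht.
  destruct WG as [[Hnd Hall] [Hsym [Hw0 [Hdiag Hmu]]]].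
  destruct Hheat as [Hd0 _].
  destruct Hphi as [Hphipos [Hdphi Hrel]].
  destruct HF as [_ [HFnn [_ [HFinc _]]]].
  assert (Hut : forall s y, 0 < s -> 0 < u s y) by (intros; apply Hpos; lra).
  assert (Part2 : forall t x, 0 < t -> Lalpha vs w mu a (fun y => ln (u t y)) x <= phi t).
  { apply (maxprinc vs (fun s y => Lalpha vs w mu a (fun z => ln (u s z)) y)
       (fun s y => Calpha vs w mu a (fun z => ln (u s z)) y) phi F); auto.
    - intros s y Hs. apply dW; [lra|auto|intros; apply Hut; auto|intros; apply Hd0; auto].
    - exists (vsum vs (fun y => / a * (/ mu y * vsum vs (fun z => w y z)))).
      intros s y Hs.
      assert (Hnn : forall y, 0 <= / a * (/ mu y * vsum vs (fun z => w y z))).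
      { intros y'. apply Rmult_le_pos; [left; apply Rinv_0_lt_compat; lra|].
        apply Rmult_le_pos; [left; apply Rinv_0_lt_compat; auto| apply vsum_nonneg; auto]. }
      eapply Rle_trans; [| apply (vsum_ge_term vs _ y Hnn (Hall y))]. cbv beta.
      unfold Lalpha, Psi, Upsilon'.
      assert (Hle : -1 * vsum vs (fun z => w y z) <=
         vsum vs (fun z => w y z * (exp (a * ln (u s z) - a * ln (u s y)) - 1))).
      { rewrite <- vsum_scal. apply vsum_le. intros z.
        pose proof (exp_pos (a * ln (u s z) - a * ln (u s y))). pose proof (Hw0 y z). nra. }
      pose proof (Hmu y). pose proof (Rinv_0_lt_compat _ (Hmu y)).
      pose proof (Rinv_0_lt_compat a ltac:(lra)).
      set (S := vsum vs (fun z => w y z * (exp (a * ln (u s z) - a * ln (u s y)) - 1))) in *.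
      set (S0 := vsum vs (fun z => w y z)) in *.
      assert (- S <= S0) by lra.
      assert (/ mu y * - S <= / mu y * S0) by (apply Rmult_le_compat_l; lra).
      assert (/ a * (/ mu y * - S) <= / a * (/ mu y * S0)) by (apply Rmult_le_compat_l; lra).
      replace (- / a * (/ mu y * S)) with (/ a * (/ mu y * - S)) by ring. lra.
    - intros s y Hs Hp Hmax.
      pose proof (Lalpha_lt_Lop vs w mu a (fun z => ln (u s z)) y ltac:(lra) (Hmu y) (Hw0 y) Hall Hp) as Hlt.
      pose proof (HCD y (fun z => ln (u s z)) Hp (fun z _ => Hmax z)) as Hc.
      set (Wv := Lalpha vs w mu a (fun z => ln (u s z)) y) in *.
      set (L := Lop vs w mu (fun z => ln (u s z)) y) in *.
      pose proof (HFinc Wv L Hp Hlt) as Hq. pose proof (HFnn Wv ltac:(lra)).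
      assert (HFW : F Wv = Wv * (F Wv / Wv)) by (field; lra).
      assert (HFL : F L = L * (F L / L)) by (field; lra).
      assert (0 <= F Wv / Wv) by (apply Rmult_le_pos; [lra| left; apply Rinv_0_lt_compat; lra]).
      assert (F Wv < F L) by nra. lra. }
  split; [apply part1; [lra|auto|intros; apply Hut; auto]|].
  split; [apply Part2; auto|].
  exists (Psi vs w mu Upsilon' (fun z => ln (u t z)) x). split.
  - apply dlog; [auto|intros; apply Hut; auto|apply Hd0; auto].
  - rewrite part3 by (try lra; auto). pose proof (Part2 t x Ht). lra.
Qed.
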